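(* Let $\sigma$ be a signature and $\mathcal K$ a nonempty class of causal teams over $\sigma$ (respectively, of generalized causal teams over $\sigma$). The following are equivalent: (i) $\mathcal K$ is causally downward closed and closed under equivalence; (ii) $\mathcal K=\{T:T\models\varphi\}$ for some $\mathcal{CO}_{\sqcup}[\sigma]$-formula $\varphi$; (iii) $\mathcal K=\{T:T\models\varphi\}$ for some $\mathcal{COD}[\sigma]$-formula $\varphi$ (satisfaction being $\models^c$, respectively $\models^g$).
   Context: A signature $\sigma=(\mathrm{Dom},\mathrm{Ran})$: $\mathrm{Dom}$ is a nonempty finite set of variables and each $X\in\mathrm{Dom}$ has a nonempty finite range $\mathrm{Ran}(X)$. For a sequence $\mathbf X=\langle X_1,\dots,X_n\rangle$, $\mathrm{Ran}(\mathbf X)=\prod_i\mathrm{Ran}(X_i)$; $\mathbf X=\mathbf x$ abbreviates $X_1=x_1\wedge\dots\wedge X_n=x_n$; it is inconsistent if it contains $X=x$ and $X=x'$ with $x\ne x'$. Languages: $\mathcal{CO}[\sigma]$: $\alpha::=X=x\mid\neg\alpha\mid\alpha\wedge\alpha\mid\alpha\vee\alpha\mid\mathbf X=\mathbf x\;\Box\!\!\rightarrow\alpha$. $\mathcal{CO}_{\sqcup}[\sigma]$: $\varphi::=X=x\mid\neg\alpha\mid\varphi\wedge\varphi\mid\varphi\vee\varphi\mid\varphi\sqcup\varphi\mid\mathbf X=\mathbf x\;\Box\!\!\rightarrow\varphi$ ($\alpha\in\mathcal{CO}[\sigma]$, $\sqcup$ the global disjunction). $\mathcal{COD}[\sigma]$: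 $\varphi::=X=x\mid{=}(\mathbf X;Y)\mid\neg\alpha\mid\varphi\wedge\varphi\mid\varphi\vee\varphi\mid\mathbf X=\mathbf x\;\Box\!\!\rightarrow\varphi$ ($\alpha\in\mathcal{CO}[\sigma]$). Assignments $s$ on $\mathrm{Dom}$ with $s(X)\in\mathrm{Ran}(X)$ form $\mathbb A_\sigma$. A system of functions $\mathcal F$ assigns to each $V$ in $\mathrm{En}(\mathcal F)\subseteq\mathrm{Dom}$ a parent set $PA^{\mathcal F}_V\subseteq\mathrm{Dom}\setminus\{V\}$ and $\mathcal F_V:\mathrm{Ran}(PA^{\mathcal F}_V)\to\mathrm{Ran}(V)$; $\mathrm{Ex}(\mathcal F)=\mathrm{Dom}\setminus\mathrm{En}(\mathcal F)$; only recursive systems (acyclic parent graph) are considered, forming the finite set $\mathbb F_\sigma$. $s$ is compatible with $\mathcal F$ if $s(V)=\mathcal F_V(s(PA^{\mathcal F}_V))$ for $V\in\mathrm{En}(\mathcal F)$; $\mathbb S_\sigma$ is the set of compatible pairs $(s,\mathcal F)$. For consistent $\mathbf X=\mathbf x$, $\mathcal F_{\mathbf X=\mathbf x}$ restricts $\mathcal F$ to $\mathrm{En}(\mathcal F)\setminus\mathbf X$, and $s^{\mathcal F}_{\mathbf X=\mathbf x}$ is defined recursively: $X_i\mapsto x_i$; $V\mapsto s(V)$ for $V\in\mathrm{Ex}(\mathcal F)\setminus\mathbf X$; $V\mapsto\mathcal F_V(s^{\mathcal F}_{\mathbf X=\mathbf x}(PA^{\mathcal F}_V))$ otherwise. Causal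 team: $T=(T^-,\mathcal F)$, $\mathcal F\in\mathbb F_\sigma$, $T^-$ a set of assignments compatible with $\mathcal F$; all teams with empty team component are identified as $\emptyset$. Causal subteam: $(S^-,\mathcal F)$ with $S^-\subseteq T^-$ (and $\emptyset$). $T_{\mathbf X=\mathbf x}=(\{s^{\mathcal F}_{\mathbf X=\mathbf x}:s\in T^-\},\mathcal F_{\mathbf X=\mathbf x})$. $\models^c$: $T\models X=x$ iff $s(X)=x$ for all $s\in T^-$; $T\models{=}(\mathbf X;Y)$ iff for all $s,s'\in T^-$, $s(\mathbf X)=s'(\mathbf X)$ implies $s(Y)=s'(Y)$; $T\models\neg\alpha$ iff $(\{s\},\mathcal F)\not\models\alpha$ for all $s\in T^-$; $\wedge$ classical; $T\models\varphi\vee\psi$ iff there are causal subteams $T_1,T_2$ with $T_1^-\cup T_2^-=T^-$, $T_1\models\varphi$, $T_2\models\psi$; $T\models\varphi\sqcup\psi$ iff $T\models\varphi$ or $T\models\psi$; $T\models\mathbf X=\mathbf x\;\Box\!\!\rightarrow\varphi$ iff $\mathbf X=\mathbf x$ is inconsistent or $T_{\mathbf X=\mathbf x}\models\varphi$. Generalized causal team: a set $T\subseteq\mathbb S_\sigma$, $T^-=\{s:(s,\mathcal F)\in T\}$, causal subteams are subsets, $T_{\mathbf X=\mathbf x}=\{(s^{\mathcal F}_{\mathbf X=\mathbf x},\mathcal F_{\mathbf X=\mathbf x}):(s,\mathcal F)\in T\}$; $\models^g$ has the same clauses except $T\models\neg\alpha$ iff $\{(s,\mathcal F)\}\not\models\alpha$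 for all $(s,\mathcal F)\in T$, and $T\models\varphi\vee\psi$ iff $T=T_1\cup T_2$ with $T_1\models\varphi$, $T_2\models\psi$. Equivalence: $\mathrm{Cn}(\mathcal F)$ is the set of $V\in\mathrm{En}(\mathcal F)$ with $\mathcal F_V$ constant; $\mathcal F_V\sim\mathcal G_V$ iff $\mathcal F_V(\mathbf x\mathbf y)=\mathcal G_V(\mathbf x\mathbf z)$ for all $\mathbf x\in\mathrm{Ran}(PA^{\mathcal F}_V\cap PA^{\mathcal G}_V)$, $\mathbf y\in\mathrm{Ran}(PA^{\mathcal F}_V\setminus PA^{\mathcal G}_V)$, $\mathbf z\in\mathrm{Ran}(PA^{\mathcal G}_V\setminus PA^{\mathcal F}_V)$; $\mathcal F\sim\mathcal G$ iff $\mathrm{En}(\mathcal F)\setminus\mathrm{Cn}(\mathcal F)=\mathrm{En}(\mathcal G)\setminus\mathrm{Cn}(\mathcal G)$ and $\mathcal F_V\sim\mathcal G_V$ for all $V$ in that set. Nonempty causal teams $(T^-,\mathcal F)\approx(S^-,\mathcal G)$ iff $T^-=S^-$ and $\mathcal F\sim\mathcal G$. For generalized causal teams, $T^{\mathcal F}=\{(s,\mathcal G)\in T:\mathcal G\sim\mathcal F\}$ and $S\approx T$ iff $(S^{\mathcal F})^-=(T^{\mathcal F})^-$ for all $\mathcal F\in\mathbb F_\sigma$. $\mathcal K$ is causally downward closed if $T\in\mathcal K$ and $S$ a causal subteam of $T$ imply $S\in\mathcal K$; closed under equivalence if $T\in\mathcal K$ and $T\approx S$ imply $S\in\mathcal K$.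 *)

(* Defs.v *)
From mathcomp Require Import all_boot.
Set Implicit Arguments. Unset Strict Implicit. Unset Printing Implicit Defensive.

(* Signature sigma = (Dom, Ran): Dom is the finite type V of variables, and  *)
(* every range Ran X is a (nonempty, stated in the theorem) finite subset of *)
(* a common finite carrier Val of values.                                    *)
Section Causal.
Context {V Val : finType}.
Variable Ran : V -> {set Val}.

(* all total maps V -> Val; the assignments of A_sigma are those in range *)
Definition assign := {ffun V -> Val}.
Definition inr_on (A : {set V}) (t : assign) := [forall v in A, t v \in Ran v].
Definition inr (t : assign) := inr_on setT t.
Definition agree_on (A : {set V}) (t t' : assign) := [forall v in A, t v == t' v].

(* Raw representation of a system of functions:
   (En, PA, F) where PA v is the parent set of v, and F v t is
   Some (F_v (t restricted to PA v)) when v is endogenous and t is in range on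
   PA v, and None otherwise.  The well-formedness predicate [wf_sys] below
   makes this representation canonical, so that the systems [F] with
   [wf_sys F] are in bijection with the set F_sigma of recursive systems. *)
Definition sys := ({set V} * {ffun V -> {set V}} * {ffun V -> {ffun assign -> option Val}})%type.
Definition en (F : sys) : {set V} := F.1.1.
Definition pa (F : sys) (v : V) : {set V} := F.1.2 v.
Definition fn (F : sys) (v : V) (t : assign) : option Val := F.2 v t.

Definition parent_rel (F : sys) : rel V := fun u w => u \in pa F w.
Definition acyclic (F : sys) :=
  [forall v, forall u, (u \in pa F v) ==> ~~ connect (parent_rel F) v u].

Definition wf_sys (F : sys) : bool :=
  [&& [forall v, v \notin pa F v],
      [forall v, (v \notin en F) ==>
                 ((pa F v == set0) && [forall t, fn F v t == None])],
      [forall v, (v \in en F) ==> [forall t,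
          if fn F v t is Some y then inr_on (pa F v) t && (y \in Ran v)
          else ~~ inr_on (pa F v) t]],
      [forall v, forall t, forall t',
          agree_on (pa F v) t t' ==> (fn F v t == fn F v t')]
    & acyclic F].

Definition compat (F : sys) (s : assign) :=
  [forall v in en F, fn F v s == Some (s v)].

Definition state (s : assign) (F : sys) := [&& inr s, wf_sys F & compat F s].

Definition interv := seq (V * Val).
Definition consistent (xs : interv) :=
  all (fun p => all (fun q => (p.1 == q.1) ==> (p.2 == q.2)) xs) xs.
Definition look (xs : interv) (v : V) : option Val :=
  ohead [seq p.2 | p <- xs & p.1 == v].
Definition ivars (xs : interv) : {set V} := [set v | v \in map fst xs].

Definition restr (F : sys) (xs : interv) : sys :=
  (en F :\: ivars xs,
   [ffun v => if v \in ivars xs then set0 else pa F v],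
   [ffun v => if v \in ivars xs then [ffun _ => None] else F.2 v]).

(* s^F_{X=x}: the recursive definition is computed by iterating the defining
   equations #|V| times (which suffices since the parent graph is acyclic). *)
Definition step (F : sys) (xs : interv) (s t : assign) : assign :=
  [ffun v => if look xs v is Some x then x
             else if v \in en F then odflt (t v) (fn F v t) else s v].
Definition doint (F : sys) (xs : interv) (s : assign) : assign :=
  iter #|V| (step F xs s) s.

Inductive fml : Type :=
  | FEq  of V & Val
  | FDep of seq V & V
  | FNeg of fml
  | FAnd of fml & fml
  | FOr  of fml & fml
  | FGOr of fml & fml
  | FCf  of interv & fml.

Fixpoint isCO (f : fml) : bool :=
  match f with
  | FEq _ _ => true
  | FNeg a => isCO a
  | FAnd a b | FOr a b => isCO a && isCO b
  | FCf _ a => isCO a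
  | _ => false
  end.

Fixpoint isCOsq (f : fml) : bool :=
  match f with
  | FEq _ _ => true
  | FNeg a => isCO a
  | FAnd a b | FOr a b | FGOr a b => isCOsq a && isCOsq b
  | FCf _ a => isCOsq a
  | FDep _ _ => false
  end.

Fixpoint isCOD (f : fml) : bool :=
  match f with
  | FEq _ _ | FDep _ _ => true
  | FNeg a => isCO a
  | FAnd a b | FOr a b => isCOD a && isCOD b
  | FCf _ a => isCOD a
  | FGOr _ _ => false
  end.

Fixpoint wff (f : fml) : bool :=
  match f with
  | FEq X x => x \in Ran X
  | FDep _ _ => true
  | FNeg a => wff a
  | FAnd a b | FOr a b | FGOr a b => wff a && wff b
  | FCf xs a => all (fun p => p.2 \in Ran p.1) xs && wff a
  end.

(* A causal team is represented by a pair (T^-, F); all pairs with empty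
   team component are identified (see [ct_class]). *)
Definition cteam (T : {set assign} * sys) :=
  wf_sys T.2 && [forall s in T.1, inr s && compat T.2 s].

Fixpoint sat_c (f : fml) (T : {set assign}) (F : sys) : Prop :=
  match f with
  | FEq X x => forall s, s \in T -> s X = x
  | FDep Xs Y => forall s s', s \in T -> s' \in T ->
                 (forall X, X \in Xs -> s X = s' X) -> s Y = s' Y
  | FNeg a => forall s, s \in T -> ~ sat_c a [set s] F
  | FAnd a b => sat_c a T F /\ sat_c b T F
  | FOr a b => exists T1 T2 : {set assign},
                 T1 :|: T2 = T /\ sat_c a T1 F /\ sat_c b T2 F
  | FGOr a b => sat_c a T F \/ sat_c b T F
  | FCf xs a => consistent xs ->
                 sat_c a [set doint F xs s | s in T] (restr F xs)
  end.

Definition gteam (T : {set (assign * sys)}) := [forall p in T, state p.1 p.2].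

Fixpoint sat_g (f : fml) (T : {set (assign * sys)}) : Prop :=
  match f with
  | FEq X x => forall p, p \in T -> p.1 X = x
  | FDep Xs Y => forall p p', p \in T -> p' \in T ->
                 (forall X, X \in Xs -> p.1 X = p'.1 X) -> p.1 Y = p'.1 Y
  | FNeg a => forall p, p \in T -> ~ sat_g a [set p]
  | FAnd a b => sat_g a T /\ sat_g b T
  | FOr a b => exists T1 T2 : {set (assign * sys)},
                 T1 :|: T2 = T /\ sat_g a T1 /\ sat_g b T2
  | FGOr a b => sat_g a T \/ sat_g b T
  | FCf xs a => consistent xs ->
                 sat_g a [set (doint p.2 xs p.1, restr p.2 xs) | p in T]
  end.

Definition cnst (F : sys) (v : V) :=
  (v \in en F) && [forall t, forall t', inr t ==> inr t' ==> (fn F v t == fn F v t')].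
Definition encn (F : sys) : {set V} := [set v in en F | ~~ cnst F v].
(* F_v ~ G_v: F_v(x y) = G_v(x z) for all x on the common parents, y, z on the
   remaining ones; written with full in-range assignments t, t' that agree on
   the common parents (t gives x y, t' gives x z). *)
Definition simfn (F G : sys) (v : V) :=
  [forall t, forall t', inr t ==> inr t' ==> agree_on (pa F v :&: pa G v) t t' ==>
    (fn F v t == fn G v t')].
Definition simsys (F G : sys) :=
  (encn F == encn G) && [forall v in encn F, simfn F G v].

Definition gproj (T : {set (assign * sys)}) (F : sys) : {set assign} :=
  [set p.1 | p in [set p in T | simsys p.2 F]].
Definition geqv (S T : {set (assign * sys)}) :=
  forall F, wf_sys F -> gproj S F = gproj T F.

(* a class of causal teams: a predicate on pairs which holds only of causal
   teams and respects the identification of all empty teams *)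
Definition ct_class (K : {set assign} * sys -> Prop) :=
  (forall T, K T -> cteam T) /\
  (forall F G, K (set0, F) -> wf_sys G -> K (set0, G)).
Definition gt_class (K : {set (assign * sys)} -> Prop) :=
  forall T, K T -> gteam T.

Definition c_downward (K : {set assign} * sys -> Prop) :=
  forall T S : {set assign} * sys, K T -> S.2 = T.2 -> S.1 \subset T.1 -> K S.
Definition c_eqclosed (K : {set assign} * sys -> Prop) :=
  forall T S : {set assign} * sys, K T -> cteam S -> T.1 != set0 -> T.1 = S.1 -> simsys T.2 S.2 -> K S.
Definition g_downward (K : {set (assign * sys)} -> Prop) :=
  forall T S : {set (assign * sys)}, K T -> S \subset T -> K S.
Definition g_eqclosed (K : {set (assign * sys)} -> Prop) :=
  forall T S, K T -> gteam S -> geqv T S -> K S.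

Definition c_defines (K : {set assign} * sys -> Prop) (f : fml) :=
  forall T, cteam T -> (K T <-> sat_c f T.1 T.2).
Definition g_defines (K : {set (assign * sys)} -> Prop) (f : fml) :=
  forall T, gteam T -> (K T <-> sat_g f T).

End Causal.

(* Main.v *)
Require Import Defs.
From mathcomp Require Import all_boot.
From Stdlib Require Import Classical ClassicalEpsilon.
Set Implicit Arguments. Unset Strict Implicit. Unset Printing Implicit Defensive.

Definition asb (P : Prop) : bool :=
  if excluded_middle_informative P then true else false.
Lemma asbP P : reflect P (asb P).
Proof. rewrite /asb; case: excluded_middle_informative => h; by constructor. Qed.

Section Basics.
Variables (V Val : finType) (Ran : V -> {set Val}).
Local Notation assign := (@assign V Val).
Local Notation sys := (@sys V Val).
Local Notation interv := (@interv V Val).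

Lemma inrP (t : assign) : reflect (forall v, t v \in Ran v) (inr Ran t).
Proof.
apply: (iffP forallP) => H v; first by move: (H v); rewrite in_setT.
by rewrite in_setT H.
Qed.

Lemma inr_onP (A : {set V}) (t : assign) :
  reflect (forall v, v \in A -> t v \in Ran v) (inr_on Ran A t).
Proof. apply: (iffP forallP) => H v; [by move=> vA; move: (H v); rewrite vA|by apply/implyP/H]. Qed.

Lemma agree_onP (A : {set V}) (t t' : assign) :
  reflect (forall v, v \in A -> t v = t' v) (agree_on A t t').
Proof.
apply: (iffP forallP) => H v; first by move=> vA; move: (H v); rewrite vA => /eqP.
by apply/implyP => /H ->.
Qed.

Lemma inr_on_inr A t : inr Ran t -> inr_on Ran A t.
Proof. by move/inrP=> H; apply/inr_onP. Qed.

Section WF.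
Variable F : sys.
Hypothesis wfF : wf_sys Ran F.

Lemma wf_self v : v \notin pa F v.
Proof. by case/and5P: wfF => /forallP H _ _ _ _. Qed.

Lemma wf_exo v : v \notin en F -> pa F v = set0 /\ forall t, fn F v t = None.
Proof.
case/and5P: wfF => _ /forallP H _ _ _ nv.
move: (H v); rewrite nv /= => /andP[/eqP -> /forallP H2]; split=> // t.
exact/eqP/H2.
Qed.

Lemma wf_en_some v t : v \in en F -> inr Ran t ->
  exists2 y, fn F v t = Some y & y \in Ran v.
Proof.
case/and5P: wfF => _ _ /forallP H _ _ ev it.
move: (H v); rewrite ev /= => /forallP /(_ t).
case: (fn F v t) => [y /andP[_ yR]|]; first by exists y.
by rewrite inr_on_inr.
Qed.

Lemma wf_fn_ran v t y : fn F v t = Some y -> y \in Ran v.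
Proof.
case/and5P: wfF => _ _ /forallP H _ _.
case ev: (v \in en F).
  by move: (H v); rewrite ev /= => /forallP /(_ t) => + E; rewrite E => /andP[].
by case: (wf_exo (negbT ev)) => _ ->.
Qed.

Lemma wf_agree v t t' : agree_on (pa F v) t t' -> fn F v t = fn F v t'.
Proof.
case/and5P: wfF => _ _ _ /forallP H _ ag.
by move: (H v) => /forallP /(_ t) /forallP /(_ t') /implyP /(_ ag) /eqP.
Qed.

Lemma wf_acyc u v : u \in pa F v -> ~~ connect (parent_rel F) v u.
Proof.
case/and5P: wfF => _ _ _ _ /forallP H uv.
by move: (H v) => /forallP /(_ u) /implyP /(_ uv).
Qed.

Definition anc v := [set u | connect (parent_rel F) u v].

Lemma anc_lt u v : u \in pa F v -> #|anc u| < #|anc v|.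
Proof.
move=> uv; apply: proper_card; apply/properP; split.
  apply/subsetP => w; rewrite !inE => cw.
  by apply: connect_trans cw (connect1 _).
exists v; first by rewrite inE connect0.
by rewrite inE; apply: wf_acyc.
Qed.

Lemma anc_pos v : 0 < #|anc v|.
Proof. by apply/card_gt0P; exists v; rewrite inE connect0. Qed.

End WF.

Definition xs_ok (xs : interv) := all (fun p : V * Val => p.2 \in Ran p.1) xs.

Lemma look_ran (xs : interv) v x : xs_ok xs -> look xs v = Some x -> x \in Ran v.
Proof.
elim: xs => [|p xs IH] //= /andP[p2 ok].
rewrite /look /=; case: eqP => [<- [<-] //|_]; exact: IH.
Qed.

Lemma look_ivars (xs : interv) (v : V) : (look xs v == None) = (v \notin ivars xs).
Proof.
rewrite /ivars inE; elim: xs => [|p xs IH] //=.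
move: IH; rewrite /look /= in_cons; case: (p.1 =P v) => [->|ne] IH /=; first by rewrite eqxx.
rewrite IH; case: eqP => // E; case: ne; by rewrite E.
Qed.

Lemma stepE (F : sys) (xs : interv) (s t : assign) v : step F xs s t v =
  if look xs v is Some x then x
  else if v \in en F then odflt (t v) (fn F v t) else s v.
Proof. by rewrite /step ffunE. Qed.

Section Step.
Variables (F : sys) (xs : interv) (s : assign).
Hypotheses (wfF : wf_sys Ran F) (ins : inr Ran s) (okx : xs_ok xs).

Lemma inr_step t : inr Ran t -> inr Ran (step F xs s t).
Proof.
move=> it; apply/inrP => v; rewrite stepE.
case E: (look xs v) => [x|]; first exact: look_ran E.
case ev: (v \in en F); last exact/inrP.
by case: (wf_en_some wfF ev it) => y -> yR.
Qed.

Lemma step_dep t1 t2 v : inr Ran t1 -> inr Ran t2 -> agree_on (pa F v) t1 t2 ->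
  step F xs s t1 v = step F xs s t2 v.
Proof.
move=> i1 i2 ag; rewrite !stepE; case: (look xs v) => // .
case ev: (v \in en F) => //.
rewrite -(wf_agree wfF ag).
by case: (wf_en_some wfF ev i1) => y -> _.
Qed.

Lemma inr_iter n : inr Ran (iter n (step F xs s) s).
Proof. by elim: n => //= n IH; apply: inr_step. Qed.

Lemma iter_stab k v : #|anc F v| <= k -> forall m, k <= m ->
  iter m (step F xs s) s v = iter k (step F xs s) s v.
Proof.
elim: k v => [|k IH] v hv m km; first by move: (anc_pos F v); rewrite leqn0 in hv; rewrite (eqP hv).
case: m km => // m km /=.
apply: step_dep; try exact: inr_iter.
apply/agree_onP => u uv; apply: IH => //.
by rewrite -ltnS; apply: leq_trans hv; apply: anc_lt.
Qed.

Lemma inr_doint : inr Ran (doint F xs s).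
Proof. exact: inr_iter. Qed.

Lemma doint_fix : step F xs s (doint F xs s) = doint F xs s.
Proof.
apply/ffunP => v; rewrite /doint -iterS; apply: iter_stab => //.
exact: max_card.
Qed.

Lemma fix_uniq u1 u2 : inr Ran u1 -> inr Ran u2 ->
  step F xs s u1 = u1 -> step F xs s u2 = u2 -> u1 = u2.
Proof.
move=> i1 i2 f1 f2.
suff H : forall n v, #|anc F v| <= n -> u1 v = u2 v.
  by apply/ffunP => v; apply: (H #|V|); apply: max_card.
elim=> [|n IH] v hv; first by move: (anc_pos F v); rewrite leqn0 in hv; rewrite (eqP hv).
rewrite -f1 -f2; apply: step_dep => //.
apply/agree_onP => u uv; apply: IH.
by rewrite -ltnS; apply: leq_trans hv; apply: anc_lt.
Qed.

Lemma doint_uniq u : inr Ran u -> step F xs s u = u -> doint F xs s = u.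
Proof. by move=> iu fu; apply: fix_uniq => //; [exact: inr_doint|exact: doint_fix]. Qed.

End Step.
End Basics.
Section Restr.
Variables (V Val : finType) (Ran : V -> {set Val}).
Local Notation assign := (@assign V Val).
Local Notation sys := (@sys V Val).
Local Notation interv := (@interv V Val).

Lemma en_restr (F : sys) (xs : interv) : en (restr F xs) = en F :\: ivars xs.
Proof. by []. Qed.
Lemma pa_restr (F : sys) (xs : interv) v :
  pa (restr F xs) v = if v \in ivars xs then set0 else pa F v.
Proof. by rewrite /pa /restr /= ffunE. Qed.
Lemma fn_restr (F : sys) (xs : interv) v t :
  fn (restr F xs) v t = if v \in ivars xs then None else fn F v t.
Proof. by rewrite /fn /restr /= ffunE; case: ifP => //; rewrite ffunE. Qed.

Lemma compatP (F : sys) (s : assign) :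
  reflect (forall v, v \in en F -> fn F v s = Some (s v)) (compat F s).
Proof.
apply: (iffP forallP) => H v; first by move=> ev; move: (H v); rewrite ev => /eqP.
by apply/implyP => /H ->.
Qed.

Lemma cnstE (F : sys) v : cnst Ran F v = (v \in en F) &&
  [forall t, forall t', inr Ran t ==> inr Ran t' ==> (fn F v t == fn F v t')].
Proof. by []. Qed.

Lemma encnE (F : sys) v : (v \in encn Ran F) = (v \in en F) && ~~ cnst Ran F v.
Proof. by rewrite inE. Qed.

Lemma cnstP (F : sys) v : v \in en F ->
  reflect (forall t t', inr Ran t -> inr Ran t' -> fn F v t = fn F v t') (cnst Ran F v).
Proof.
move=> ev; rewrite cnstE ev /=; apply: (iffP forallP) => H.
  by move=> t t' it it'; move: (H t) => /forallP /(_ t') /implyP /(_ it) /implyP /(_ it') /eqP.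
by move=> t; apply/forallP => t'; apply/implyP => it; apply/implyP => it'; rewrite (H t t' it it').
Qed.

Lemma simfnP (F G : sys) v : reflect (forall t t', inr Ran t -> inr Ran t' ->
   agree_on (pa F v :&: pa G v) t t' -> fn F v t = fn G v t') (simfn Ran F G v).
Proof.
apply: (iffP forallP) => H.
  move=> t t' it it' ag.
  by move: (H t) => /forallP /(_ t') /implyP /(_ it) /implyP /(_ it') /implyP /(_ ag) /eqP.
move=> t; apply/forallP => t'; do 3!apply/implyP => ?; apply/eqP; exact: H.
Qed.

Lemma simsysP (F G : sys) : reflect (encn Ran F = encn Ran G /\ forall v, v \in encn Ran F -> simfn Ran F G v)
  (simsys Ran F G).
Proof.
apply: (iffP andP) => [[/eqP E /forallP H]|[E H]]; split => //.
- by move=> v ev; move: (H v); rewrite ev.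
- by apply/eqP.
- by apply/forallP => v; apply/implyP/H.
Qed.

Definition mix (A : {set V}) (t t' : assign) : assign := [ffun u => if u \in A then t u else t' u].

Lemma inr_mix A t t' : inr Ran t -> inr Ran t' -> inr Ran (mix A t t').
Proof. move=> /inrP h /inrP h'; apply/inrP => v; rewrite ffunE; case: ifP => _; by []. Qed.

Lemma simfn_eq (F G : sys) v t : simfn Ran F G v -> inr Ran t -> fn F v t = fn G v t.
Proof. by move=> /simfnP H it; apply: H => //; apply/agree_onP. Qed.

Lemma simfn_refl (F : sys) v : wf_sys Ran F -> simfn Ran F F v.
Proof.
move=> wf; apply/simfnP => t t' _ _ ag; apply: (wf_agree wf).
by apply/agree_onP => u uv; move/agree_onP: ag; apply; rewrite setIid.
Qed.

Lemma simfn_sym (F G : sys) v : simfn Ran F G v -> simfn Ran G F v.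
Proof.
move/simfnP => H; apply/simfnP => t t' it it' ag; symmetry; apply: H => //.
by apply/agree_onP => u; rewrite setIC => /(agree_onP _ _ _ ag).
Qed.

Lemma simfn_trans (F G H : sys) v : simfn Ran F G v -> simfn Ran G H v -> simfn Ran F H v.
Proof.
move=> /simfnP h1 /simfnP h2; apply/simfnP => t t' it it' /agree_onP ag.
pose t'' := mix (pa F v) t t'.
have i'' : inr Ran t'' by apply: inr_mix.
rewrite (h1 t t'') //; last first.
  by apply/agree_onP => u; rewrite inE ffunE => /andP[-> _].
apply: h2 => //; apply/agree_onP => u; rewrite inE ffunE => /andP[_ uH].
by case: ifP => // uF; apply: ag; rewrite inE uF.
Qed.

Lemma simsys_refl (F : sys) : wf_sys Ran F -> simsys Ran F F.
Proof. by move=> wf; apply/simsysP; split=> // v _; apply: simfn_refl. Qed.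

Lemma simsys_sym (F G : sys) : simsys Ran F G -> simsys Ran G F.
Proof.
by case/simsysP => E H; apply/simsysP; split=> // v; rewrite -E => /H /simfn_sym.
Qed.

Lemma simsys_trans (F G H : sys) : simsys Ran F G -> simsys Ran G H -> simsys Ran F H.
Proof.
case/simsysP => E1 h1 /simsysP [E2 h2]; apply/simsysP; split; first by rewrite E1.
by move=> v vF; apply: simfn_trans (h1 _ vF) (h2 _ _); rewrite -E1.
Qed.

Lemma cnst_fn_s (F : sys) (s t : assign) v : wf_sys Ran F -> inr Ran s -> compat F s ->
  v \in en F -> cnst Ran F v -> inr Ran t -> fn F v t = Some (s v).
Proof.
move=> wf is_ cs ev /(cnstP ev) c it; rewrite (c t s) //; exact: (compatP _ _ cs).
Qed.

Lemma doint_nonencn (F : sys) (xs : interv) (s : assign) w :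
  wf_sys Ran F -> inr Ran s -> compat F s -> xs_ok Ran xs ->
  look xs w = None -> w \notin encn Ran F -> doint F xs s w = s w.
Proof.
move=> wf is_ cs ok lw nw.
rewrite -(doint_fix wf is_ ok) stepE lw.
case ev: (w \in en F) => //.
move: nw; rewrite encnE ev /= negbK => c.
by rewrite (cnst_fn_s wf is_ cs ev c) //; apply: inr_doint.
Qed.

Lemma doint_sim (F G : sys) (xs : interv) (s : assign) :
  wf_sys Ran F -> wf_sys Ran G -> simsys Ran F G -> inr Ran s -> compat F s -> compat G s ->
  xs_ok Ran xs -> doint F xs s = doint G xs s.
Proof.
move=> wfF wfG sFG is_ cF cG ok.
have iu := inr_doint wfF is_ ok.
set u := doint F xs s.
symmetry; apply: (doint_uniq wfG is_ ok iu).
case/simsysP: sFG => E H.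
apply/ffunP => w; rewrite stepE.
case lw: (look xs w) => [x|].
  by rewrite -(doint_fix wfF is_ ok) stepE lw.
case eG: (w \in en G).
  case cw: (cnst Ran G w).
    rewrite (cnst_fn_s wfG is_ cG eG cw iu) /=.
    by rewrite doint_nonencn // E encnE eG cw.
  have wG : w \in encn Ran G by rewrite encnE eG cw.
  have wF : w \in encn Ran F by rewrite E.
  have eF : w \in en F by move: wF; rewrite encnE => /andP[].
  rewrite -(simfn_eq (H _ wF) iu).
  have fx := f_equal (fun f : assign => f w) (doint_fix wfF is_ ok).
  by rewrite -/u /= stepE lw eF in fx.
by rewrite doint_nonencn // E encnE eG.
Qed.

Lemma compat_restr_doint (F : sys) (xs : interv) (s : assign) :
  wf_sys Ran F -> inr Ran s -> xs_ok Ran xs -> compat (restr F xs) (doint F xs s).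
Proof.
move=> wf is_ ok; apply/compatP => v; rewrite en_restr inE => /andP[niv ev].
rewrite fn_restr (negbTE niv).
have lv : look xs v = None by apply/eqP; rewrite look_ivars.
have iu := inr_doint wf is_ ok.
case: (wf_en_some wf ev iu) => y E _.
by rewrite -{2}(doint_fix wf is_ ok) stepE lv ev E.
Qed.

Lemma wf_restr (F : sys) (xs : interv) : wf_sys Ran F -> wf_sys Ran (restr F xs).
Proof.
move=> wf; have wf' := wf; case/and5P: wf' => _ _ /forallP H3 _ _.
apply/and5P; split.
- apply/forallP => v; rewrite pa_restr; case: ifP => _; [by rewrite inE|exact: (wf_self wf)].
- apply/forallP => v; apply/implyP; rewrite en_restr inE negb_and negbK => H.
  rewrite pa_restr; case iv: (v \in ivars xs).
    by rewrite eqxx /=; apply/forallP => t; rewrite fn_restr iv.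
  rewrite iv /= in H; case: (wf_exo wf H) => -> hn.
  by rewrite eqxx /=; apply/forallP => t; rewrite fn_restr iv hn.
- apply/forallP => v; apply/implyP; rewrite en_restr inE => /andP[niv ev].
  apply/forallP => t; rewrite pa_restr fn_restr (negbTE niv).
  by move: (H3 v); rewrite ev /= => /forallP /(_ t).
- apply/forallP => v; apply/forallP => t; apply/forallP => t'; apply/implyP.
  rewrite pa_restr !fn_restr; case: ifP => // _ ag.
  by rewrite (wf_agree wf ag).
- apply/forallP => v; apply/forallP => u; apply/implyP; rewrite pa_restr.
  case: ifP => [_|_ uv]; first by rewrite inE.
  apply/negP => C; move: (wf_acyc wf uv); rewrite (connect_sub _ C) //.
  move=> x y; rewrite /parent_rel pa_restr; case: ifP => [_|_ xy]; first by rewrite inE.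
  exact: connect1.
Qed.

Lemma encn_restr (F : sys) (xs : interv) v :
  (v \in encn Ran (restr F xs)) = (v \notin ivars xs) && (v \in encn Ran F).
Proof.
rewrite !encnE !cnstE en_restr inE.
case iv: (v \in ivars xs) => //=; case: (v \in en F) => //=.
congr (~~ _); apply: eq_forallb => t; apply: eq_forallb => t'.
by rewrite !fn_restr iv.
Qed.

Lemma simsys_restr (F G : sys) (xs : interv) :
  simsys Ran F G -> simsys Ran (restr F xs) (restr G xs).
Proof.
case/simsysP => E H; apply/simsysP; split.
  by apply/setP => v; rewrite !encn_restr E.
move=> v; rewrite encn_restr => /andP[niv vF].
apply/simfnP => t t' it it'; rewrite !pa_restr !fn_restr (negbTE niv).
by move/simfnP: (H _ vF); apply.
Qed.

Lemma stateP (s : assign) (F : sys) :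
  reflect [/\ inr Ran s, wf_sys Ran F & compat F s] (state Ran s F).
Proof. exact: and3P. Qed.

Lemma state_img (s : assign) (F : sys) (xs : interv) : xs_ok Ran xs ->
  state Ran s F -> state Ran (doint F xs s) (restr F xs).
Proof.
move=> ok /stateP [is_ wf cs]; apply/stateP; split.
- exact: inr_doint.
- exact: wf_restr.
- exact: compat_restr_doint.
Qed.

End Restr.
Section Sem.
Variables (V Val : finType) (Ran : V -> {set Val}).
Local Notation assign := (@assign V Val).
Local Notation sys := (@sys V Val).
Local Notation interv := (@interv V Val).
Local Notation pair := (assign * sys)%type.
Local Notation fml := (@fml V Val).

Definition mrel (p q : pair) := (p.1 == q.1) && simsys Ran p.2 q.2.
Definition gsim (S T : {set pair}) :=
  (forall p, p \in S -> exists2 q, q \in T & mrel p q) /\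
  (forall q, q \in T -> exists2 p, p \in S & mrel p q).

Lemma gteamP (T : {set pair}) : reflect (forall p, p \in T -> state Ran p.1 p.2) (gteam Ran T).
Proof.
apply: (iffP forallP) => H p; first by move=> pT; move: (H p); rewrite pT.
by apply/implyP => /H.
Qed.

Lemma gteam_sub (S T : {set pair}) : gteam Ran T -> S \subset T -> gteam Ran S.
Proof. by move=> /gteamP H /subsetP sub; apply/gteamP => p /sub /H. Qed.

Lemma mrel_refl p : state Ran p.1 p.2 -> mrel p p.
Proof. by case/stateP=> _ wf _; rewrite /mrel eqxx simsys_refl. Qed.
Lemma mrel_sym p q : mrel p q -> mrel q p.
Proof. by rewrite /mrel => /andP[/eqP -> /simsys_sym ->]; rewrite eqxx. Qed.
Lemma mrel_trans p q r : mrel p q -> mrel q r -> mrel p r.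
Proof.
rewrite /mrel => /andP[/eqP -> h1] /andP[/eqP -> h2]; rewrite eqxx /=.
exact: simsys_trans h1 h2.
Qed.

Lemma gsim_sym S T : gsim S T -> gsim T S.
Proof.
case=> h1 h2; split => p pT.
  by case: (h2 p pT) => q qS /mrel_sym; exists q.
by case: (h1 p pT) => q qS /mrel_sym; exists q.
Qed.

Lemma gsim_trans S T U : gsim S T -> gsim T U -> gsim S U.
Proof.
case=> h1 h2 [h3 h4]; split => p pS.
  case: (h1 p pS) => q qT m1; case: (h3 q qT) => r rU m2; exists r => //.
  exact: mrel_trans m1 m2.
case: (h4 p pS) => q qT m1; case: (h2 q qT) => r rU m2; exists r => //.
exact: mrel_trans m2 m1.
Qed.

Lemma gsim_refl S : gteam Ran S -> gsim S S.
Proof. by move/gteamP=> H; split=> p pS; exists p => //; apply: mrel_refl; apply: H. Qed.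

Lemma sat_g0 (f : fml) : @sat_g V Val f set0.
Proof.
elim: f => //=.
- by move=> ? ? p; rewrite inE.
- by move=> ? ? p p'; rewrite inE.
- by move=> a _ p; rewrite inE.
- by move=> a IHa b IHb; exists set0, set0; rewrite setU0.
- by move=> a IHa b IHb; left.
- by move=> xs a IHa _; rewrite imset0.
Qed.

Lemma sat_g_down (f : fml) (S T : {set pair}) : sat_g f T -> S \subset T -> sat_g f S.
Proof.
elim: f S T => /=.
- by move=> X x S T H /subsetP sub p /sub /H.
- by move=> Xs Y S T H /subsetP sub p p' /sub pT /sub p'T; apply: H.
- by move=> a IH S T H /subsetP sub p /sub /H.
- by move=> a IHa b IHb S T [Ha Hb] sub; split; [apply: IHa Ha sub|apply: IHb Hb sub].
- move=> a IHa b IHb S T [T1 [T2 [E [H1 H2]]]] sub.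
  exists (T1 :&: S), (T2 :&: S); split; first by rewrite -setIUl E; apply/setIidPr.
  by split; [apply: IHa H1 _|apply: IHb H2 _]; apply: subsetIl.
- by move=> a IHa b IHb S T [H|H] sub; [left; apply: IHa H sub|right; apply: IHb H sub].
- by move=> xs a IH S T H sub c; apply: IH (H c) _; apply: imsetS.
Qed.


Definition imgp (xs : interv) (p : pair) : pair := (doint p.2 xs p.1, restr p.2 xs).

Lemma wff_cf xs a : wff Ran (FCf xs a) -> xs_ok Ran xs /\ wff Ran a.
Proof. by case/andP. Qed.

Lemma state_imgp xs p : xs_ok Ran xs -> state Ran p.1 p.2 -> state Ran (imgp xs p).1 (imgp xs p).2.
Proof. by move=> ok sp; apply: state_img. Qed.

Lemma gteam_img xs T : xs_ok Ran xs -> gteam Ran T -> gteam Ran [set imgp xs p | p in T].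
Proof.
move=> ok /gteamP H; apply/gteamP => q /imsetP [p pT ->].
by apply: state_imgp => //; apply: H.
Qed.

Lemma mrel_img xs p q : xs_ok Ran xs -> state Ran p.1 p.2 -> state Ran q.1 q.2 ->
  mrel p q -> mrel (imgp xs p) (imgp xs q).
Proof.
move=> ok /stateP[ip wp cp] /stateP[iq wq cq] /andP[/eqP E sm].
rewrite /mrel /imgp /= (simsys_restr _ sm) andbT.
rewrite E in ip cp *.
by rewrite (doint_sim wp wq sm ip cp cq ok).
Qed.

Lemma gsim_img xs S T : xs_ok Ran xs -> gteam Ran S -> gteam Ran T -> gsim S T ->
  gsim [set imgp xs p | p in S] [set imgp xs p | p in T].
Proof.
move=> ok /gteamP gS /gteamP gT [h1 h2]; split.
  move=> p' /imsetP [p pS ->]; case: (h1 p pS) => q qT m.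
  by exists (imgp xs q); [apply: imset_f|apply: mrel_img => //; [apply: gS|apply: gT]].
move=> q' /imsetP [q qT ->]; case: (h2 q qT) => p pS m.
by exists (imgp xs p); [apply: imset_f|apply: mrel_img => //; [apply: gS|apply: gT]].
Qed.

Lemma gsim1 p q : mrel p q -> gsim [set p] [set q].
Proof. by move=> m; split => x; rewrite inE => /eqP ->; [exists q|exists p]; rewrite ?inE. Qed.

Lemma gteam1 p : state Ran p.1 p.2 -> gteam Ran [set p].
Proof. by move=> sp; apply/gteamP => x; rewrite inE => /eqP ->. Qed.

Lemma sat_g_sim (f : fml) (S T : {set pair}) : wff Ran f -> gteam Ran S -> gteam Ran T ->
  gsim S T -> sat_g f S -> sat_g f T.
Proof.
elim: f S T => /=.
- move=> X x S T _ _ _ [_ h2] H q qT.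
  by case: (h2 q qT) => p pS /andP[/eqP <- _]; apply: H.
- move=> Xs Y S T _ _ _ [_ h2] H q q' qT q'T ag.
  case: (h2 q qT) => p pS /andP[/eqP E _]; case: (h2 q' q'T) => p' p'S /andP[/eqP E' _].
  by rewrite -E -E'; apply: H => // X /ag; rewrite E E'.
- move=> a IH S T wa gS gT [_ h2] H q qT Hq.
  case: (h2 q qT) => p pS m; apply: (H p pS); apply: (IH [set q]) => //.
  + by apply: gteam_sub gT _; rewrite sub1set.
  + by apply: gteam_sub gS _; rewrite sub1set.
  + by apply: gsim1; apply: mrel_sym.
- move=> a IHa b IHb S T /andP[wa wb] gS gT sm [Ha Hb].
  by split; [apply: IHa Ha|apply: IHb Hb].
- move=> a IHa b IHb S T /andP[wa wb] gS gT [h1 h2] [S1 [S2 [E [H1 H2]]]].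
  exists [set q in T | [exists p in S1, mrel p q]], [set q in T | [exists p in S2, mrel p q]].
  split.
    apply/setP => q; rewrite !inE -andb_orr; case qT: (q \in T) => //=.
    case: (h2 q qT) => p; rewrite -E inE => /orP[] pS m; apply/orP; [left|right];
      by apply/existsP; exists p; rewrite pS.
  have sub (Si : {set pair}) : Si \subset S -> gsim Si [set q in T | [exists p in Si, mrel p q]].
    move=> /subsetP sub; split.
      move=> p pSi; case: (h1 p (sub p pSi)) => q qT m; exists q => //.
      by rewrite inE qT; apply/existsP; exists p; rewrite pSi.
    by move=> q; rewrite inE => /andP[_ /existsP [p /andP[pSi m]]]; exists p.
  have gsub (Si : {set pair}) : gteam Ran [set q in T | [exists p in Si, mrel p q]].
    by apply: gteam_sub gT _; apply/subsetP => q; rewrite inE => /andP[].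
  split.
    apply: (IHa S1) => //; first by apply: gteam_sub gS _; rewrite -E subsetUl.
    by apply: sub; rewrite -E subsetUl.
  apply: (IHb S2) => //; first by apply: gteam_sub gS _; rewrite -E subsetUr.
  by apply: sub; rewrite -E subsetUr.
- move=> a IHa b IHb S T /andP[wa wb] gS gT sm [H|H].
  by left; apply: IHa H. by right; apply: IHb H.
- move=> xs a IH S T /andP[ok wa] gS gT sm H c.
  apply: (IH [set imgp xs p | p in S]) => //; try exact: gteam_img.
    exact: gsim_img.
  exact: H.
Qed.

Lemma geqv_gsim (S T : {set pair}) : gteam Ran S -> gteam Ran T ->
  (geqv Ran S T <-> gsim S T).
Proof.
move=> /gteamP gS /gteamP gT; split.
  move=> H; split.
    move=> p pS; case/stateP: (gS p pS) => _ wp _.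
    have : p.1 \in gproj Ran S p.2.
      by apply/imsetP; exists p => //; rewrite inE pS simsys_refl.
    rewrite H // => /imsetP [q]; rewrite inE => /andP[qT sq] E.
    by exists q => //; rewrite /mrel E eqxx simsys_sym.
  move=> q qT; case/stateP: (gT q qT) => _ wq _.
  have : q.1 \in gproj Ran T q.2.
    by apply/imsetP; exists q => //; rewrite inE qT simsys_refl.
  rewrite -H // => /imsetP [p]; rewrite inE => /andP[pS sp] E.
  by exists p => //; rewrite /mrel E eqxx sp.
move=> [h1 h2] F wF; apply/setP => x; apply/imsetP/imsetP => [][p]; rewrite inE => /andP[pX sp] ->.
  case: (h1 p pX) => q qT /andP[/eqP E m]; exists q; last by [].
  by rewrite inE qT (simsys_trans (simsys_sym m) sp).
case: (h2 p pX) => q qT /andP[/eqP E m]; exists q; last by [].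
by rewrite inE qT (simsys_trans m sp).
Qed.

Definition tg (S : {set assign}) (G : sys) : {set pair} := [set (s, G) | s in S].

Lemma tg_sub (T : {set pair}) S G : T \subset tg S G -> T = tg [set p.1 | p in T] G.
Proof.
move/subsetP => sub; apply/setP => p; apply/idP/imsetP.
  move=> pT; case/imsetP: (sub p pT) => s sS E.
  by exists s => //; apply/imsetP; exists p => //; rewrite E.
case=> s /imsetP [q qT ->] ->; case/imsetP: (sub q qT) => s' _ E.
by rewrite E /= -E.
Qed.

Lemma fst_tg S G : [set p.1 | p in tg S G] = S.
Proof.
apply/setP => s; apply/imsetP/idP => [[p /imsetP [s' s'S ->] ->] //|sS].
by exists (s, G) => //; apply: imset_f.
Qed.

Lemma tg1 s G : tg [set s] G = [set (s, G)].
Proof. by rewrite /tg imset_set1. Qed.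

Lemma tg_img xs S G : [set imgp xs p | p in tg S G] = tg [set doint G xs s | s in S] (restr G xs).
Proof.
apply/setP => p; apply/imsetP/imsetP.
  case=> q /imsetP [s sS ->] ->; exists (doint G xs s) => //; exact: imset_f.
case=> u /imsetP [s sS ->] ->; exists (s, G) => //; exact: imset_f.
Qed.

Lemma sat_c_g (f : fml) (S : {set assign}) (G : sys) : sat_c f S G <-> sat_g f (tg S G).
Proof.
elim: f S G => /=.
- move=> X x S G; split=> H.
    by move=> p /imsetP [s sS ->]; apply: H.
  by move=> s sS; apply: (H (s, G)); apply: imset_f.
- move=> Xs Y S G; split=> H.
    by move=> p p' /imsetP [s sS ->] /imsetP [s' s'S ->]; apply: H.
  by move=> s s' sS s'S; apply: (H (s, G) (s', G)); apply: imset_f.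
- move=> a IH S G; split=> H.
    by move=> p /imsetP [s sS ->]; rewrite -tg1 -IH; apply: H.
  by move=> s sS; rewrite IH tg1; apply: H; apply: imset_f.
- by move=> a IHa b IHb S G; rewrite IHa IHb.
- move=> a IHa b IHb S G; split.
    case=> [S1 [S2 [E [H1 H2]]]]; exists (tg S1 G), (tg S2 G).
    by rewrite /tg -imsetU E -IHa -IHb.
  case=> [T1 [T2 [E [H1 H2]]]].
  have s1 : T1 \subset tg S G by rewrite -E subsetUl.
  have s2 : T2 \subset tg S G by rewrite -E subsetUr.
  exists [set p.1 | p in T1], [set p.1 | p in T2]; split.
    by rewrite -imsetU E fst_tg.
  by rewrite IHa IHb -(tg_sub s1) -(tg_sub s2).
- by move=> a IHa b IHb S G; rewrite IHa IHb.
- move=> xs a IH S G; split=> H c.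
    by rewrite tg_img -IH; apply: H.
  by rewrite IH -tg_img; apply: H.
Qed.

End Sem.
Section Forms.
Variables (V Val : finType) (Ran : V -> {set Val}).
Local Notation assign := (@assign V Val).
Local Notation sys := (@sys V Val).
Local Notation interv := (@interv V Val).
Local Notation pair := (assign * sys)%type.
Local Notation fml := (@fml V Val).
Variables (v0 : V) (x0 : Val).
Hypothesis Hx0 : x0 \in Ran v0.
Local Notation mrel := (mrel Ran).
Local Notation gsim := (gsim Ran).

Definition bot : fml := FAnd (FEq v0 x0) (FNeg (FEq v0 x0)).
Definition top : fml := FNeg bot.
Definition bAnd (l : seq fml) := foldr FAnd top l.
Definition bOr (l : seq fml) := foldr FOr bot l.
Definition bGOr (l : seq fml) := foldr FGOr bot l.

Lemma sat_bot (T : {set pair}) : sat_g bot T <-> T = set0.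
Proof.
split; last by move->; apply: sat_g0.
case=> H1 H2; apply/setP => p; rewrite inE; apply/negP => pT.
by apply: (H2 p pT) => q; rewrite inE => /eqP ->; apply: H1.
Qed.

Lemma sat_top (T : {set pair}) : sat_g top T.
Proof. by move=> p _ /sat_bot /setP /(_ p); rewrite !inE eqxx. Qed.

Lemma sat_bAnd (I : eqType) (g : I -> fml) (s : seq I) (T : {set pair}) :
  sat_g (bAnd (map g s)) T <-> (forall x, x \in s -> sat_g (g x) T).
Proof.
elim: s => [|x s IH] /=; first by split=> // _; apply: sat_top.
rewrite IH; split.
  by case=> h1 h2 y; rewrite in_cons => /orP[/eqP ->|/h2].
by move=> H; split; [apply: H; rewrite mem_head|move=> y ys; apply: H; rewrite in_cons ys orbT].
Qed.

Lemma sat_bGOr (I : eqType) (g : I -> fml) (s : seq I) (T : {set pair}) :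
  sat_g (bGOr (map g s)) T <-> (T = set0 \/ exists2 x, x \in s & sat_g (g x) T).
Proof.
elim: s => [|x s IH]; first by split; [move/sat_bot; left|case=> [->|[]//]; apply: sat_g0].
change (sat_g (g x) T \/ sat_g (bGOr (map g s)) T <-> (T = set0 \/ exists2 x0 : I, x0 \in x :: s & sat_g (g x0) T)).
rewrite IH; split.
  case=> [H|[->|[y ys H]]]; [right; exists x => //; exact: mem_head|by left|].
  by right; exists y => //; rewrite in_cons ys orbT.
case=> [->|[y]]; first by right; left.
by rewrite in_cons => /orP[/eqP ->|ys H]; [left|right; right; exists y].
Qed.

Lemma sat_or1 a b (p : pair) : sat_g (FOr a b) [set p] <-> sat_g a [set p] \/ sat_g b [set p].
Proof.
split.
  case=> T1 [T2 [E [H1 H2]]].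
  have : p \in T1 :|: T2 by rewrite E inE.
  rewrite inE => /orP[pT|pT]; [left; apply: sat_g_down H1 _|right; apply: sat_g_down H2 _];
    by rewrite sub1set.
case=> H; [exists [set p], set0|exists set0, [set p]]; rewrite ?setU0 ?set0U;
  by split => //; split => //; apply: sat_g0.
Qed.

Lemma sat_neg1 a (p : pair) : sat_g (FNeg a) [set p] <-> ~ sat_g a [set p].
Proof.
split; first by move=> H; apply: H; rewrite inE.
by move=> H q; rewrite inE => /eqP ->.
Qed.

Lemma flat f (T : {set pair}) : isCO f -> sat_g f T <-> (forall p, p \in T -> sat_g f [set p]).
Proof.
elim: f T => //=.
- move=> X x T _; split; first by move=> H p pT q; rewrite inE => /eqP ->; apply: H.
  by move=> H p pT; apply: (H p pT); rewrite inE.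
- move=> a IH T _; split; first by move=> H p pT q; rewrite inE => /eqP ->; apply: H.
  by move=> H p pT; apply: (H p pT); rewrite inE.
- move=> a IHa b IHb T /andP[ca cb]; rewrite IHa // IHb //; split.
    by case=> h1 h2 p pT; split; [apply: (IHa _ ca).2|apply: (IHb _ cb).2] => q;
      rewrite inE => /eqP ->; [apply: h1|apply: h2].
  move=> H; split => p pT; [move: (H p pT) => [/(IHa _ ca) h _]|move: (H p pT) => [_ /(IHb _ cb) h]];
    by apply: h; rewrite inE.
- move=> a IHa b IHb T /andP[ca cb]; split.
    case=> T1 [T2 [E [H1 H2]]] p; rewrite -E inE => /orP[] pT; apply/sat_or1;
      [left; apply: sat_g_down H1 _|right; apply: sat_g_down H2 _]; by rewrite sub1set.
  move=> H; exists [set p in T | asb (sat_g a [set p])], [set p in T | ~~ asb (sat_g a [set p])].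
  split; first by apply/setP => p; rewrite !inE -andb_orr orbN andbT.
  split; [apply/(IHa _ ca)|apply/(IHb _ cb)] => p; rewrite inE => /andP[pT].
    by move/asbP.
  by move/asbP => na; case/sat_or1: (H p pT).
- move=> xs a IH T ca; split.
    move=> H p pT c; rewrite imset_set1; apply/(IH _ ca) => [q].
    by rewrite inE => /eqP ->; move/(IH _ ca): (H c); apply; apply: imset_f.
  move=> H c; apply/(IH _ ca) => q /imsetP [p pT ->].
  by move: (H p pT c); rewrite imset_set1.
Qed.

Lemma isCO_bAnd (l : seq fml) : isCO (bAnd l) = all isCO l.
Proof. by elim: l => //= f l ->. Qed.
Lemma isCO_bOr (l : seq fml) : isCO (bOr l) = all isCO l.
Proof. by elim: l => //= f l ->. Qed.
Lemma isCOD_bAnd (l : seq fml) : isCOD (bAnd l) = all isCOD l.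
Proof. by elim: l => //= f l ->. Qed.
Lemma isCOD_bOr (l : seq fml) : isCOD (bOr l) = all isCOD l.
Proof. by elim: l => //= f l ->. Qed.
Lemma isCOsq_bOr (l : seq fml) : isCOsq (bOr l) = all isCOsq l.
Proof. by elim: l => //= f l ->. Qed.
Lemma isCOsq_bGOr (l : seq fml) : isCOsq (bGOr l) = all isCOsq l.
Proof. by elim: l => //= f l ->. Qed.
Lemma wff_bAnd (l : seq fml) : wff Ran (bAnd l) = all (wff Ran) l.
Proof. by elim: l => /= [|f l ->]; rewrite ?Hx0. Qed.
Lemma wff_bOr (l : seq fml) : wff Ran (bOr l) = all (wff Ran) l.
Proof. by elim: l => /= [|f l ->]; rewrite ?Hx0. Qed.
Lemma wff_bGOr (l : seq fml) : wff Ran (bGOr l) = all (wff Ran) l.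
Proof. by elim: l => /= [|f l ->]; rewrite ?Hx0. Qed.

Lemma isCO_COD (f : fml) : isCO f -> isCOD f.
Proof. by elim: f => //= [a IHa b IHb|a IHa b IHb] /andP[/IHa -> /IHb ->]. Qed.
Lemma isCO_COsq (f : fml) : isCO f -> isCOsq f.
Proof. by elim: f => //= [a IHa b IHb|a IHa b IHb] /andP[/IHa -> /IHb ->]. Qed.


Definition tl : seq assign := [seq t <- enum {ffun V -> Val} | inr Ran t].
Lemma mem_tl t : (t \in tl) = inr Ran t.
Proof. by rewrite mem_filter mem_enum andbT. Qed.

Definition xsv (t : assign) (v : V) : interv := [seq (u, t u) | u <- enum V & u != v].

Lemma look_map (t : assign) (l : seq V) w :
  look [seq (u, t u) | u <- l] w = if w \in l then Some (t w) else None.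
Proof.
elim: l => [|u l IH] //; move: IH; rewrite /look /= in_cons.
case: (u =P w) => [->|ne] IH /=; first by rewrite eqxx.
by rewrite IH; case: (w =P u) => // E; case: ne.
Qed.

Lemma look_xsv t v w : look (xsv t v) w = if w == v then None else Some (t w).
Proof.
by rewrite /xsv look_map mem_filter mem_enum andbT; case: (w == v).
Qed.

Lemma xs_ok_xsv t v : inr Ran t -> xs_ok Ran (xsv t v).
Proof. by move/inrP => it; apply/allP => p /mapP [u _ ->]; apply: it. Qed.

Lemma cons_xsv t v : consistent (xsv t v).
Proof.
apply/allP => p /mapP [u _ ->]; apply/allP => q /mapP [u' _ ->] /=.
by apply/implyP => /eqP ->.
Qed.

Definition W (G : sys) v (t s : assign) : Val :=
  if v \in encn Ran G then odflt (s v) (fn G v t) else s v.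

Lemma W_ran G v t s : wf_sys Ran G -> inr Ran s -> inr Ran t -> W G v t s \in Ran v.
Proof.
move=> wf is_ it; rewrite /W; case: ifP => [|_]; last exact/inrP.
rewrite encnE => /andP[ev _]; case: (wf_en_some wf ev it) => y -> //.
Qed.

Lemma doint_xsv G s t v : state Ran s G -> inr Ran t -> doint G (xsv t v) s v = W G v t s.
Proof.
case/stateP => is_ wf cs it.
pose u : assign := [ffun w => if w == v then W G v t s else t w].
have iu : inr Ran u.
  apply/inrP => w; rewrite ffunE; case: eqP => [->|_]; [exact: W_ran|by move/inrP: it].
suff -> : doint G (xsv t v) s = u by rewrite ffunE eqxx.
apply: (doint_uniq wf is_ (xs_ok_xsv v it) iu).
apply/ffunP => w; rewrite stepE look_xsv ffunE.
case: (w =P v) => [->|_] //.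
have E : fn G v u = fn G v t.
  apply: (wf_agree wf); apply/agree_onP => w' wv; rewrite ffunE.
  by case: eqP => // E; move: (wf_self wf v); rewrite -{1}E wv.
rewrite E /W encnE.
case ev: (v \in en G) => //=.
case cv: (cnst Ran G v) => /=.
  by rewrite (cnst_fn_s wf is_ cs ev cv it).
by case: (wf_en_some wf ev it) => y -> _.
Qed.

Definition PhiE (F : sys) v t : fml := FCf (xsv t v) (FEq v (odflt x0 (fn F v t))).
Definition PhiX v t x : fml := FOr (FNeg (FEq v x)) (FCf (xsv t v) (FEq v x)).
Definition PhiV (F : sys) v : fml :=
  if v \in encn Ran F then bAnd [seq PhiE F v t | t <- tl]
  else bAnd [seq bAnd [seq PhiX v t x | x <- enum (Ran v)] | t <- tl].
Definition Phi (F : sys) : fml := bAnd [seq PhiV F v | v <- enum V].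

Lemma sat_cf1 xs a (p : pair) : consistent xs ->
  sat_g (FCf xs a) [set p] <-> sat_g a [set imgp xs p].
Proof.
move=> c; rewrite /= imset_set1; split; first by apply.
by move=> H _.
Qed.

Lemma sat_eq1 X x (p : pair) : sat_g (FEq X x) [set p] <-> p.1 X = x.
Proof. split; first by apply; rewrite inE. by move=> H q; rewrite inE => /eqP ->. Qed.

Lemma sat_PhiV F v (s : assign) (G : sys) : wf_sys Ran F -> state Ran s G ->
  sat_g (PhiV F v) [set (s, G)] <-> (forall t, inr Ran t -> W G v t s = W F v t s).
Proof.
move=> wF sG; case/stateP: (sG) => is_ _ _.
rewrite /PhiV; case vF: (v \in encn Ran F).
  have ev : v \in en F by move: vF; rewrite encnE => /andP[].
  have E t : inr Ran t -> W F v t s = odflt x0 (fn F v t).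
    by move=> it; rewrite /W vF; case: (wf_en_some wF ev it) => y -> _.
  rewrite sat_bAnd; split.
    move=> H t it; move: (H t); rewrite mem_tl => /(_ it).
    by rewrite sat_cf1 ?cons_xsv // sat_eq1 /= doint_xsv // E.
  move=> H t; rewrite mem_tl => it.
  by rewrite sat_cf1 ?cons_xsv // sat_eq1 /= doint_xsv // H // E.
rewrite sat_bAnd; split.
  move=> H t it; move: (H t); rewrite mem_tl => /(_ it).
  rewrite sat_bAnd => /(_ (s v)); rewrite mem_enum.
  move/inrP: is_ => /(_ v) sv /(_ sv) /sat_or1 [].
    by rewrite sat_neg1 sat_eq1.
  by rewrite sat_cf1 ?cons_xsv // sat_eq1 /= doint_xsv // /W vF.
move=> H t; rewrite mem_tl => it.
apply/sat_bAnd => x _; apply/sat_or1.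
case: (s v =P x) => [E|ne]; last by left; rewrite sat_neg1 sat_eq1.
right; rewrite sat_cf1 ?cons_xsv // sat_eq1 /= doint_xsv //.
by rewrite H // /W vF.
Qed.

Lemma sat_Phi1 F (s : assign) (G : sys) : wf_sys Ran F -> state Ran s G ->
  sat_g (Phi F) [set (s, G)] <-> (forall v t, inr Ran t -> W G v t s = W F v t s).
Proof.
move=> wF sG; rewrite /Phi sat_bAnd; split.
  by move=> H v; apply/(sat_PhiV v wF sG); apply: H; rewrite mem_enum.
by move=> H v _; apply/(sat_PhiV v wF sG); apply: H.
Qed.

Lemma cnst_of (F : sys) v c : v \in en F -> (forall t, inr Ran t -> fn F v t = Some c) -> cnst Ran F v.
Proof. by move=> ev H; apply/(cnstP _ ev) => t t' it it'; rewrite !H. Qed.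

Lemma simfn_of_eq (F G : sys) v : wf_sys Ran F -> wf_sys Ran G ->
  (forall t, inr Ran t -> fn F v t = fn G v t) -> simfn Ran F G v.
Proof.
move=> wF wG H; apply/simfnP => t t' it it' /agree_onP ag.
pose t'' := mix (pa F v) t t'.
have i'' : inr Ran t'' by apply: inr_mix.
rewrite (wf_agree wF (t' := t'')); last by apply/agree_onP => u uF; rewrite ffunE uF.
rewrite H //; apply: (wf_agree wG); apply/agree_onP => u uG; rewrite ffunE.
by case: ifP => // uF; apply: ag; rewrite inE uF.
Qed.

Lemma keyW (F G : sys) (s : assign) : wf_sys Ran F -> state Ran s G ->
  (forall v t, inr Ran t -> W G v t s = W F v t s) <-> simsys Ran F G.
Proof.
move=> wF sG; case/stateP: (sG) => is_ wG cG.
have someF v t : v \in encn Ran F -> inr Ran t -> fn F v t = Some (odflt (s v) (fn F v t)).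
  rewrite encnE => /andP[ev _] it; by case: (wf_en_some wF ev it) => y -> _.
have someG v t : v \in encn Ran G -> inr Ran t -> fn G v t = Some (odflt (s v) (fn G v t)).
  rewrite encnE => /andP[ev _] it; by case: (wf_en_some wG ev it) => y -> _.
split => [H|].
  have E : encn Ran F = encn Ran G.
    apply/setP => v; case vF: (v \in encn Ran F); case vG: (v \in encn Ran G) => //.
      have : cnst Ran F v.
        apply: (cnst_of (c := s v)); first by move: vF; rewrite encnE => /andP[].
        move=> t it; rewrite someF //; congr Some.
        by move: (H v t it); rewrite /W vF vG => E; rewrite {2}E.
      by move: vF; rewrite encnE => /andP[_ /negP].
    have : cnst Ran G v.
      apply: (cnst_of (c := s v)); first by move: vG; rewrite encnE => /andP[].
      move=> t it; rewrite someG //; congr Some.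
      by move: (H v t it); rewrite /W vF vG.
    by move: vG; rewrite encnE => /andP[_ /negP].
  apply/simsysP; split => // v vF.
  have vG : v \in encn Ran G by rewrite -E.
  apply: simfn_of_eq => // t it.
  rewrite someF // someG //; congr Some.
  by move: (H v t it); rewrite /W vF vG.
case/simsysP => E Hs v t it; rewrite /W -E.
case: ifP => // vF; by rewrite (simfn_eq (Hs v vF) it).
Qed.

Lemma sat_Phi_1 F (s : assign) (G : sys) : wf_sys Ran F -> state Ran s G ->
  sat_g (Phi F) [set (s, G)] <-> simsys Ran F G.
Proof. by move=> wF sG; rewrite sat_Phi1 // keyW. Qed.

Lemma all_map_in (A : eqType) (B : Type) (P : pred B) (g : A -> B) (s : seq A) :
  (forall x, x \in s -> P (g x)) -> all P (map g s).
Proof. by move=> H; rewrite all_map; apply/allP => x /H. Qed.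

Definition ceq (s : assign) : fml := bAnd [seq FEq v (s v) | v <- enum V].

Lemma sat_ceq s (T : {set pair}) : sat_g (ceq s) T <-> (forall p, p \in T -> p.1 = s).
Proof.
rewrite sat_bAnd; split.
  by move=> H p pT; apply/ffunP => v; apply: (H v); rewrite ?mem_enum.
by move=> H v _ p pT /=; rewrite (H p pT).
Qed.

Definition chi (p : pair) : fml := FAnd (ceq p.1) (Phi p.2).

Lemma isCO_ceq s : isCO (ceq s).
Proof. by rewrite isCO_bAnd; apply: all_map_in. Qed.

Lemma isCO_Phi F : isCO (Phi F).
Proof.
rewrite isCO_bAnd; apply: all_map_in => v _; rewrite /PhiV.
case: ifP => _; rewrite isCO_bAnd; apply: all_map_in => // t _.
by rewrite isCO_bAnd; apply: all_map_in.
Qed.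

Lemma isCO_chi p : isCO (chi p).
Proof. by rewrite /= isCO_ceq isCO_Phi. Qed.

Lemma wff_ceq s : inr Ran s -> wff Ran (ceq s).
Proof. by move/inrP=> is_; rewrite wff_bAnd; apply: all_map_in => v _ /=. Qed.

Lemma wff_Phi F : wf_sys Ran F -> wff Ran (Phi F).
Proof.
move=> wF; rewrite wff_bAnd; apply: all_map_in => v _; rewrite /PhiV.
case: ifP => vF; rewrite wff_bAnd; apply: all_map_in => t; rewrite mem_tl => it.
  have := xs_ok_xsv v it; rewrite /xs_ok /= => ->.
  have ev : v \in en F by move: vF; rewrite encnE => /andP[].
  by case: (wf_en_some wF ev it) => y -> .
rewrite wff_bAnd; apply: all_map_in => x; rewrite mem_enum => xv.
by have := xs_ok_xsv v it; rewrite /xs_ok /= => ->; rewrite xv.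
Qed.

Lemma wff_chi p : state Ran p.1 p.2 -> wff Ran (chi p).
Proof. by case/stateP => is_ wf _; rewrite /= wff_ceq // wff_Phi. Qed.

Lemma sat_chi1 p q : state Ran p.1 p.2 -> state Ran q.1 q.2 ->
  sat_g (chi p) [set q] <-> mrel p q.
Proof.
case: q => s G /= sp sq; case/stateP: (sp) => _ wp _.
rewrite /chi /= sat_ceq sat_Phi_1 //; split.
  case=> h1 h2; rewrite /mrel h2 andbT; apply/eqP; rewrite (h1 (s, G)) ?inE //.
case/andP => /eqP E h; split => // r; rewrite inE => /eqP -> /=; by rewrite E.
Qed.

Lemma sat_chi p (T : {set pair}) : state Ran p.1 p.2 -> gteam Ran T ->
  sat_g (chi p) T <-> (forall q, q \in T -> mrel p q).
Proof.
move=> sp /gteamP gT; rewrite flat ?isCO_chi //; split => H q qT.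
  by apply/sat_chi1 => //; [apply: gT|apply: H].
by apply/sat_chi1 => //; [apply: gT|apply: H].
Qed.

Lemma sat_bOr1 (I : eqType) (g : I -> fml) (s : seq I) (p : pair) :
  sat_g (bOr (map g s)) [set p] <-> exists2 x, x \in s & sat_g (g x) [set p].
Proof.
elim: s => [|x s IH].
  split; last by case.
  by move/sat_bot/setP/(_ p); rewrite !inE eqxx.
change (sat_g (FOr (g x) (bOr (map g s))) [set p] <-> exists2 y, y \in x :: s & sat_g (g y) [set p]).
rewrite sat_or1 IH; split.
  by case=> [H|[y ys H]]; [exists x; rewrite ?mem_head|exists y; rewrite // in_cons ys orbT].
case=> y; rewrite in_cons => /orP[/eqP ->|ys H]; [by left|by right; exists y].
Qed.

Lemma sat_bOrchi (X T : {set pair}) : gteam Ran X -> gteam Ran T ->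
  sat_g (bOr [seq chi p | p <- enum X]) T <->
  (forall q, q \in T -> exists2 p, p \in X & mrel p q).
Proof.
move=> /gteamP gX /gteamP gT.
rewrite flat; last by rewrite isCO_bOr; apply: all_map_in => p _; apply: isCO_chi.
split => H q qT.
  case/sat_bOr1: (H q qT) => p; rewrite mem_enum => pX /sat_chi1 h.
  by exists p => //; apply: h; [apply: gX|apply: gT].
apply/sat_bOr1; case: (H q qT) => p pX m; exists p; rewrite ?mem_enum //.
by apply/sat_chi1 => //; [apply: gX|apply: gT].
Qed.

Definition dv v : fml :=
  FAnd (FDep [::] v) (bAnd [seq FCf (xsv t v) (FDep [::] v) | t <- tl]).
Definition delta : fml := bAnd [seq dv v | v <- enum V].

Lemma sat_delta (T : {set pair}) : gteam Ran T ->
  sat_g delta T <-> (forall p q, p \in T -> q \in T -> mrel p q).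
Proof.
move=> /gteamP gT; rewrite /delta sat_bAnd; split.
  move=> H p q pT qT.
  have E : p.1 = q.1.
    by apply/ffunP => v; case: (H v (mem_enum _ v)) => h _; apply: h.
  rewrite /mrel E eqxx /=.
  case/stateP: (gT p pT) => _ wp _.
  apply/(keyW wp (gT q qT)) => v t it.
  case: (H v (mem_enum _ v)) => _ /sat_bAnd /(_ t).
  rewrite mem_tl => /(_ it) /(_ (cons_xsv t v)) h.
  have := h (imgp (xsv t v) q) (imgp (xsv t v) p) (imset_f _ qT) (imset_f _ pT).
  rewrite /= !doint_xsv //; try by apply: gT.
  by rewrite E; apply => X; rewrite in_nil.
move=> H v _; split.
  by move=> p q pT qT _; case/andP: (H p q pT qT) => /eqP ->.
apply/sat_bAnd => t; rewrite mem_tl => it c p' q' /imsetP [p pT ->] /imsetP [q qT ->] _.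
rewrite /= !doint_xsv //; try by apply: gT.
case/andP: (H p q pT qT) => /eqP E sm.
case/stateP: (gT p pT) => _ wp _.
have sq := gT q qT.
by rewrite E; symmetry; exact: (proj2 (keyW wp sq) sm v t it).
Qed.

Lemma isCOD_delta : isCOD delta.
Proof.
rewrite isCOD_bAnd; apply: all_map_in => v _ /=.
by rewrite isCOD_bAnd; apply: all_map_in.
Qed.

Lemma wff_delta : wff Ran delta.
Proof.
rewrite wff_bAnd; apply: all_map_in => v _ /=.
rewrite wff_bAnd; apply: all_map_in => t; rewrite mem_tl => it /=.
by have := xs_ok_xsv v it; rewrite /xs_ok /= => ->.
Qed.

Definition theta m : fml := iter m (FOr delta) bot.

Lemma isCOD_theta m : isCOD (theta m).
Proof. by elim: m => //= m ->; rewrite isCOD_delta. Qed.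
Lemma wff_theta m : wff Ran (theta m).
Proof. by elim: m => /= [|m ->]; rewrite ?Hx0 ?wff_delta. Qed.

Definition rep (Y : {set pair}) := forall y y', y \in Y -> y' \in Y -> mrel y y' -> y = y'.

Lemma sat_theta_le m (T Y : {set pair}) : gteam Ran T -> sat_g (theta m) T ->
  Y \subset T -> rep Y -> #|Y| <= m.
Proof.
elim: m T Y => [|m IH] T Y gT.
  by move/sat_bot => -> /subset_leq_card; rewrite cards0.
case=> T1 [T2 [E [H1 H2]]] YT rY.
have gT1 : gteam Ran T1 by apply: gteam_sub gT _; rewrite -E subsetUl.
have gT2 : gteam Ran T2 by apply: gteam_sub gT _; rewrite -E subsetUr.
rewrite -(cardsID T1 Y).
have -> : m.+1 = 1 + m by [].
apply: leq_add.
  apply/card_le1_eqP => y y'; rewrite !inE => /andP[yY yT] /andP[y'Y y'T].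
  by apply: rY => //; move/(sat_delta gT1): H1; apply.
apply: (IH T2) => //.
  apply/subsetP => y; rewrite inE => /andP[nT1 yY].
  by move/subsetP: YT => /(_ y yY); rewrite -E inE (negbTE nT1).
by move=> y y'; rewrite !inE => /andP[_ yY] /andP[_ y'Y]; apply: rY.
Qed.

Lemma sat_theta_cover (l : seq pair) (T : {set pair}) : gteam Ran T ->
  (forall q, q \in T -> exists2 p, p \in l & mrel p q) -> sat_g (theta (size l)) T.
Proof.
elim: l T => [|p l IH] T gT H.
  apply/sat_bot; apply/setP => q; rewrite inE; apply/negP => qT.
  by case: (H q qT).
exists [set q in T | mrel p q], [set q in T | ~~ mrel p q]; split.
  by apply/setP => q; rewrite !inE -andb_orr orbN andbT.
split.
  apply/sat_delta; first by apply: gteam_sub gT _; apply/subsetP => q; rewrite inE => /andP[].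
  move=> q q'; rewrite !inE => /andP[_ m1] /andP[_ m2].
  exact: mrel_trans (mrel_sym m1) m2.
apply: IH; first by apply: gteam_sub gT _; apply/subsetP => q; rewrite inE => /andP[].
move=> q; rewrite inE => /andP[qT nm]; case: (H q qT) => p'.
rewrite in_cons => /orP[/eqP ->|p'l m]; first by rewrite (negbTE nm).
by exists p'.
Qed.


Definition Psi (X : {set pair}) : fml :=
  FOr (theta #|X|.-1) (FNeg (bOr [seq chi p | p <- enum X])).

Lemma sat_chis1 (X : {set pair}) q : gteam Ran X -> state Ran q.1 q.2 ->
  sat_g (bOr [seq chi p | p <- enum X]) [set q] <-> exists2 p, p \in X & mrel p q.
Proof.
move=> gX sq; rewrite sat_bOrchi //; last by apply: gteam1.
split; first by apply; rewrite inE.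
by move=> H q'; rewrite inE => /eqP ->.
Qed.

Lemma sat_Psi (X T : {set pair}) : gteam Ran X -> gteam Ran T -> rep X -> X != set0 ->
  sat_g (Psi X) T <-> exists2 x, x \in X & forall q, q \in T -> ~~ mrel x q.
Proof.
move=> gX gT rX nX; have gT' := gT; move/gteamP: gT' => sT.
split; last first.
  case=> x xX H.
  exists [set q in T | [exists p in X, mrel p q]], [set q in T | ~~ [exists p in X, mrel p q]].
  split; first by apply/setP => q; rewrite !inE -andb_orr orbN andbT.
  split.
    have -> : #|X|.-1 = size (enum (X :\ x)) by rewrite -cardE (cardsD1 x X) xX.
    apply: sat_theta_cover; first by apply: gteam_sub gT _; apply/subsetP => q; rewrite inE => /andP[].
    move=> q; rewrite inE => /andP[qT /existsP [p /andP[pX m]]].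
    exists p => //; rewrite mem_enum !inE pX andbT.
    by apply/eqP => E; move: (H q qT); rewrite -E m.
  move=> q; rewrite inE => /andP[qT nm]; rewrite sat_chis1 //; last exact: sT.
  by case=> p pX m; move/existsP: nm; apply; exists p; rewrite pX.
case=> T1 [T2 [E [H1 H2]]].
case: (boolP [exists x in X, [forall q in T, ~~ mrel x q]]).
  case/existsP => x /andP[xX /forallP Hx]; exists x => // q qT.
  by move: (Hx q); rewrite qT.
rewrite negb_exists => /forallP H0.
have H0' x : x \in X -> exists2 q, q \in T & mrel x q.
  move=> xX; move: (H0 x); rewrite xX /= negb_forall => /existsP [q].
  by rewrite negb_imply negbK => /andP[qT m]; exists q.
pose f x := odflt x [pick q in T | mrel x q].
have fP x : x \in X -> f x \in T /\ mrel x (f x).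
  move=> xX; rewrite /f; case: pickP => [q /andP[qT m] //|none].
  by case: (H0' x xX) => q qT m; move: (none q); rewrite qT m.
have gT1 : gteam Ran T1 by apply: gteam_sub gT _; rewrite -E subsetUl.
have YT1 : f @: X \subset T1.
  apply/subsetP => y /imsetP [x xX ->]; case: (fP x xX) => fT m.
  move: fT; rewrite -E inE => /orP[] // fT2.
  have := H2 _ fT2; case; apply/(sat_chis1 gX (sT _ (fP x xX).1)).
  by exists x.
have rY : rep (f @: X).
  move=> y y' /imsetP [x xX ->] /imsetP [x' x'X ->] m.
  case: (fP x xX) => _ m1; case: (fP x' x'X) => _ m2.
  by rewrite (rX x x') // (mrel_trans (mrel_trans m1 m) (mrel_sym m2)).
have cY : #|f @: X| = #|X|.
  apply: card_in_imset => x x' xX x'X E'.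
  case: (fP x xX) => _ m1; case: (fP x' x'X) => _ m2.
  by apply: rX => //; rewrite E' in m1; exact: mrel_trans m1 (mrel_sym m2).
have := sat_theta_le gT1 H1 YT1 rY; rewrite cY.
by rewrite leqNgt ltn_predL card_gt0 nX.
Qed.

Lemma isCOD_Psi X : isCOD (Psi X).
Proof.
by rewrite /= isCOD_theta /= isCO_bOr; apply: all_map_in => p _; apply: isCO_chi.
Qed.

Lemma wff_Psi X : gteam Ran X -> wff Ran (Psi X).
Proof.
move/gteamP => gX; rewrite /= wff_theta /= wff_bOr; apply: all_map_in => p.
by rewrite mem_enum => /gX /wff_chi.
Qed.

Section Class.
Variable K : {set pair} -> Prop.
Hypotheses (Kd : g_downward K) (Ke : g_eqclosed Ran K) (Kn : exists T, K T).

Lemma K0 : K set0.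
Proof. by case: Kn => T KT; apply: Kd KT _; apply: sub0set. Qed.

Lemma K_gsim T S : K T -> gteam Ran T -> gteam Ran S -> gsim T S -> K S.
Proof. by move=> KT gT gS sm; apply: (Ke KT gS); apply/(geqv_gsim gT gS). Qed.

Definition YF : fml := bAnd [seq Psi X | X <- enum {set pair} &
   asb (gteam Ran X /\ rep X /\ X != set0 /\ ~ K X)].

Lemma YF_ok T : gteam Ran T -> (K T <-> sat_g YF T).
Proof.
move=> gT; have gT' := gT; move/gteamP: gT' => sT.
rewrite /YF sat_bAnd; split.
  move=> KT X; rewrite mem_filter => /andP[/asbP [gX [rX [nX nK]]] _].
  apply/sat_Psi => //.
  case: (boolP [exists x in X, [forall q in T, ~~ mrel x q]]).
    case/existsP => x /andP[xX /forallP Hx]; exists x => // q qT.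
    by move: (Hx q); rewrite qT.
  rewrite negb_exists => /forallP H0.
  have H0' x : x \in X -> exists2 q, q \in T & mrel x q.
    move=> xX; move: (H0 x); rewrite xX /= negb_forall => /existsP [q].
    by rewrite negb_imply negbK => /andP[qT m]; exists q.
  pose T' := [set q in T | [exists x in X, mrel x q]].
  have sT' : T' \subset T by apply/subsetP => q; rewrite inE => /andP[].
  have gT'' : gteam Ran T' by apply: gteam_sub gT sT'.
  case: nK; apply: (K_gsim (Kd KT sT')) => //; split.
    move=> q; rewrite inE => /andP[_ /existsP [x /andP[xX m]]].
    by exists x => //; apply: mrel_sym.
  move=> x xX; case: (H0' x xX) => q qT m; exists q; last exact: mrel_sym.
  by rewrite inE qT; apply/existsP; exists x; rewrite xX.
move=> H; apply: NNPP => nK.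
have nT : T != set0 by apply/negP => /eqP E; apply: nK; rewrite E; apply: K0.
pose X := [set q in T | [forall q' in T, mrel q' q ==> (enum_rank q <= enum_rank q')]].
have sX : X \subset T by apply/subsetP => q; rewrite inE => /andP[].
have gX : gteam Ran X by apply: gteam_sub gT sX.
have rX : rep X.
  move=> x x'; rewrite !inE => /andP[xT /forallP hx] /andP[x'T /forallP hx'] m.
  move: (hx x'); rewrite x'T (mrel_sym m) /= => l1.
  move: (hx' x); rewrite xT m /= => l2.
  by apply: enum_rank_inj; apply/val_inj/eqP; rewrite eqn_leq l1 l2.
have cov q : q \in T -> exists2 x, x \in X & mrel x q.
  move=> qT.
  have P0 : [pred i | (i \in T) && mrel i q] q by rewrite /= qT mrel_refl //; apply: sT.
  case: (@arg_minnP _ q [pred i | (i \in T) && mrel i q] (fun i => val (enum_rank i)) P0) => x /andP[xT m] hmin.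
  exists x => //; rewrite inE xT; apply/forallP => q'; apply/implyP => q'T; apply/implyP => m'.
  by apply: hmin; rewrite /= q'T (mrel_trans m' m).
have smXT : gsim X T.
  split; last by move=> q /cov.
  move=> x xX; exists x; first by move/subsetP: sX; apply.
  by apply: mrel_refl; apply: sT; move/subsetP: sX; apply.
have nX : X != set0.
  case/set0Pn: nT => q /cov [x xX _]; by apply/set0Pn; exists x.
have nKX : ~ K X by move=> KX; apply: nK; exact: K_gsim KX gX gT smXT.
have XL : X \in [seq X <- enum {set pair} | asb (gteam Ran X /\ rep X /\ X != set0 /\ ~ K X)].
  by rewrite mem_filter mem_enum andbT; apply/asbP.
case/(sat_Psi gX gT rX nX): (H X XL) => x xX /(_ x).
have xT : x \in T by move/subsetP: sX; apply.
by rewrite xT mrel_refl //; [move=> /(_ isT)|apply: sT].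
Qed.

Definition GF : fml := bGOr (map (fun T : {set pair} => bOr [seq chi p | p <- enum T])
   [seq T <- enum {set pair} | asb (K T /\ gteam Ran T /\ T != set0)]).

Lemma GF_ok S : gteam Ran S -> (K S <-> sat_g GF S).
Proof.
move=> gS; have gS' := gS; move/gteamP: gS' => sS.
rewrite /GF sat_bGOr; split.
  move=> KS; case: (S =P set0) => [->|/eqP nS]; first by left.
  right; exists S; first by rewrite mem_filter mem_enum andbT; apply/asbP.
  by apply/sat_bOrchi => // q qS; exists q => //; apply: mrel_refl; apply: sS.
case=> [->|[T]]; first exact: K0.
rewrite mem_filter => /andP[/asbP [KT [gT nT]] _] /(sat_bOrchi gT gS) H.
pose T' := [set p in T | [exists q in S, mrel p q]].
have sT' : T' \subset T by apply/subsetP => q; rewrite inE => /andP[].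
apply: (K_gsim (Kd KT sT')) => //; first exact: gteam_sub gT sT'.
split.
  by move=> p; rewrite inE => /andP[_ /existsP [q /andP[qS m]]]; exists q.
move=> q qS; case: (H q qS) => p pT m; exists p => //.
by rewrite inE pT; apply/existsP; exists q; rewrite qS.
Qed.

End Class.

Lemma isCOD_YF K : isCOD (YF K).
Proof. by rewrite isCOD_bAnd; apply: all_map_in => X _; apply: isCOD_Psi. Qed.
Lemma wff_YF K : wff Ran (YF K).
Proof.
rewrite wff_bAnd; apply: all_map_in => X; rewrite mem_filter => /andP[/asbP [gX _] _].
exact: wff_Psi.
Qed.
Lemma isCOsq_GF K : isCOsq (GF K).
Proof.
rewrite isCOsq_bGOr; apply: all_map_in => T _; rewrite isCOsq_bOr.
by apply: all_map_in => p _; apply: isCO_COsq; apply: isCO_chi.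
Qed.
Lemma wff_GF K : wff Ran (GF K).
Proof.
rewrite wff_bGOr; apply: all_map_in => T; rewrite mem_filter => /andP[/asbP [_ [/gteamP gT _]] _].
rewrite wff_bOr; apply: all_map_in => p; rewrite mem_enum => /gT.
exact: wff_chi.
Qed.

End Forms.

Section Main.
Variables (V Val : finType) (Ran : V -> {set Val}).
Local Notation assign := (@assign V Val).
Local Notation sys := (@sys V Val).
Local Notation pair := (assign * sys)%type.
Local Notation fml := (@fml V Val).
Variables (v0 : V) (x0 : Val).
Hypothesis Hx0 : x0 \in Ran v0.

Lemma g_sound (K : {set pair} -> Prop) (f : fml) : gt_class Ran K -> wff Ran f ->
  g_defines Ran K f -> g_downward K /\ g_eqclosed Ran K.
Proof.
move=> cK wf Kf; split.
  move=> T S KT sub; have gT := cK T KT; have gS := gteam_sub gT sub.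
  apply/(Kf S gS); apply: sat_g_down sub; exact/(Kf T gT).
move=> T S KT gS eqv; have gT := cK T KT.
apply/(Kf S gS); apply: (sat_g_sim wf gT gS); first exact/(geqv_gsim gT gS).
exact/(Kf T gT).
Qed.

Lemma g_main (K : {set pair} -> Prop) : gt_class Ran K -> (exists T, K T) ->
     ((g_downward K /\ g_eqclosed Ran K) <->
        (exists f, [&& isCOsq f & wff Ran f] /\ g_defines Ran K f)) /\
     ((g_downward K /\ g_eqclosed Ran K) <->
        (exists f, [&& isCOD f & wff Ran f] /\ g_defines Ran K f)).
Proof.
move=> cK Kn; split; split.
- case=> Kd Ke; exists (GF Ran v0 x0 K); rewrite isCOsq_GF wff_GF //; split => // T gT.
  exact: GF_ok.
- by case=> f [/andP[_ wf] Kf]; apply: g_sound wf Kf.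
- case=> Kd Ke; exists (YF Ran v0 x0 K); rewrite isCOD_YF wff_YF //; split => // T gT.
  exact: YF_ok.
- by case=> f [/andP[_ wf] Kf]; apply: g_sound wf Kf.
Qed.

Lemma cteamP (T : {set assign} * sys) :
  reflect (wf_sys Ran T.2 /\ forall s, s \in T.1 -> state Ran s T.2) (cteam Ran T).
Proof.
apply: (iffP andP) => [[w /forallP H]|[w H]]; split => //.
  by move=> s sT; move: (H s); rewrite sT /= => /andP[i c]; apply/stateP.
apply/forallP => s; apply/implyP => /H /stateP [-> _ ->] //.
Qed.

Lemma gteam_tg (T : {set assign} * sys) : cteam Ran T -> gteam Ran (tg T.1 T.2).
Proof. by case/cteamP => w H; apply/gteamP => p /imsetP [s sT ->]; apply: H. Qed.

Lemma tg_match (T : {set pair}) S G p : gsim Ran T (tg S G) -> p \in T ->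
  p.1 \in S /\ simsys Ran p.2 G.
Proof.
case=> h1 _ pT; case: (h1 p pT) => q /imsetP [s sS ->] /andP[/eqP -> sm].
by split.
Qed.

Lemma c_sound (K : {set assign} * sys -> Prop) (f : fml) : ct_class Ran K -> wff Ran f ->
  c_defines Ran K f -> c_downward K /\ c_eqclosed Ran K.
Proof.
move=> [cK _] wf Kf; split.
  move=> T S KT E sub; have cT := cK T KT.
  have cS : cteam Ran S.
    case/cteamP: cT => w H; apply/cteamP; rewrite E; split => // s sS.
    by apply: H; move/subsetP: sub; apply.
  apply/(Kf S cS); apply/sat_c_g; rewrite E.
  apply: (sat_g_down (T := tg T.1 T.2)); first exact/sat_c_g/(Kf T cT).
  exact: imsetS.
move=> T S KT cS _ E sm; have cT := cK T KT.
apply/(Kf S cS); apply/sat_c_g.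
apply: (sat_g_sim wf (gteam_tg cT) (gteam_tg cS)); last exact/sat_c_g/(Kf T cT).
split.
  move=> p /imsetP [s sT ->]; exists (s, S.2); first by rewrite -E; apply: imset_f.
  by rewrite /mrel eqxx sm.
move=> p /imsetP [s sS ->]; exists (s, T.2); first by rewrite E; apply: imset_f.
by rewrite /mrel eqxx sm.
Qed.

Section CMain.
Variable K : {set assign} * sys -> Prop.
Hypotheses (cK : ct_class Ran K) (Kn : exists T, K T) (Kd : c_downward K) (Ke : c_eqclosed Ran K).

Definition K' (T : {set pair}) : Prop :=
  gteam Ran T /\ exists S G, K (S, G) /\ gsim Ran T (tg S G).

Lemma K'_class : gt_class Ran K'.
Proof. by move=> T []. Qed.

Lemma K'_n : exists T, K' T.
Proof.
case: Kn => T KT; have gT := gteam_tg (cK.1 T KT).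
exists (tg T.1 T.2); split => //; exists T.1, T.2; split; last exact: gsim_refl.
by rewrite -surjective_pairing.
Qed.

Lemma K'_down : g_downward K'.
Proof.
move=> T T' [gT [S [G [KSG sm]]]] sub; split; first exact: gteam_sub gT sub.
exists [set p.1 | p in T'], G; split.
  apply: (Kd KSG) => //=; apply/subsetP => s /imsetP [p pT' ->].
  by case: (tg_match sm (subsetP sub p pT')).
split.
  move=> p pT'; exists (p.1, G); first by apply: imset_f; apply: imset_f.
  by case: (tg_match sm (subsetP sub p pT')) => _ h; rewrite /mrel eqxx h.
move=> q /imsetP [s /imsetP [p pT' ->] ->]; exists p => //.
by case: (tg_match sm (subsetP sub p pT')) => _ h; rewrite /mrel eqxx h.
Qed.

Lemma K'_eq : g_eqclosed Ran K'.
Proof.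
move=> T T' [gT [S [G [KSG sm]]]] gT' eqv; split => //.
exists S, G; split => //; apply: gsim_trans sm.
by apply: gsim_sym; apply/(geqv_gsim gT gT').
Qed.

Lemma K_K' (T : {set assign} * sys) : cteam Ran T -> (K T <-> K' (tg T.1 T.2)).
Proof.
move=> cT; have gT := gteam_tg cT; split.
  move=> KT; split => //; exists T.1, T.2; rewrite -surjective_pairing; split => //.
  exact: gsim_refl.
case=> _ [S [G [KSG sm]]].
case/cteamP: (cT) => wT sT.
case: (T.1 =P set0) => [E|/eqP nT].
  rewrite [T]surjective_pairing E; apply: (cK.2 G) => //.
  by apply: (Kd KSG) => //; apply: sub0set.
have ES : S = T.1.
  apply/setP => s; apply/idP/idP => [sS|sT1].
    case: sm => _ /(_ (s, G) (imset_f _ sS)) [p /imsetP [s' s'T ->]].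
    by rewrite /mrel /= => /andP[/eqP <- _].
  by case: (tg_match sm (imset_f (fun s => (s, T.2)) sT1)).
case/set0Pn: (nT) => s sT1.
case: (tg_match sm (imset_f (fun s => (s, T.2)) sT1)) => _ /= smG.
apply: (Ke KSG cT) => //=; first by rewrite ES.
exact: simsys_sym.
Qed.

Lemma c_complete (g : fml -> bool) : (forall K0 : {set pair} -> Prop,
    gt_class Ran K0 -> (exists T, K0 T) -> g_downward K0 -> g_eqclosed Ran K0 ->
    exists f, [&& g f & wff Ran f] /\ g_defines Ran K0 f) ->
  exists f, [&& g f & wff Ran f] /\ c_defines Ran K f.
Proof.
move=> H; case: (H K' K'_class K'_n K'_down K'_eq) => f [gf Kf].
exists f; split => // T cT; rewrite (K_K' cT) sat_c_g.
exact: Kf (gteam_tg cT).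
Qed.

End CMain.

Lemma c_main (K : {set assign} * sys -> Prop) : ct_class Ran K -> (exists T, K T) ->
     ((c_downward K /\ c_eqclosed Ran K) <->
        (exists f, [&& isCOsq f & wff Ran f] /\ c_defines Ran K f)) /\
     ((c_downward K /\ c_eqclosed Ran K) <->
        (exists f, [&& isCOD f & wff Ran f] /\ c_defines Ran K f)).
Proof.
move=> cK Kn; split; split.
- case=> Kd Ke; apply: (c_complete cK Kn Kd Ke) => K0 c0 n0 d0 e0.
  by case: (g_main c0 n0) => [[h _] _]; apply: h.
- by case=> f [/andP[_ wf] Kf]; apply: c_sound wf Kf.
- case=> Kd Ke; apply: (c_complete cK Kn Kd Ke) => K0 c0 n0 d0 e0.
  by case: (g_main c0 n0) => [_ [h _]]; apply: h.
- by case=> f [/andP[_ wf] Kf]; apply: c_sound wf Kf.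
Qed.

End Main.

Theorem theorem5p1 (V Val : finType) (Ran : V -> {set Val})
    (HV : 0 < #|V|) (HRan : forall X : V, Ran X != set0) :
  (forall K : {set @assign V Val} * @sys V Val -> Prop,
     ct_class Ran K -> (exists T, K T) ->
     ((c_downward K /\ c_eqclosed Ran K) <->
        (exists f, [&& isCOsq f & wff Ran f] /\ c_defines Ran K f)) /\
     ((c_downward K /\ c_eqclosed Ran K) <->
        (exists f, [&& isCOD f & wff Ran f] /\ c_defines Ran K f))) /\
  (forall K : {set (@assign V Val * @sys V Val)} -> Prop,
     gt_class Ran K -> (exists T, K T) ->
     ((g_downward K /\ g_eqclosed Ran K) <->
        (exists f, [&& isCOsq f & wff Ran f] /\ g_defines Ran K f)) /\
     ((g_downward K /\ g_eqclosed Ran K) <->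
        (exists f, [&& isCOD f & wff Ran f] /\ g_defines Ran K f))).
Proof.
case/card_gt0P: HV => v0 _; case/set0Pn: (HRan v0) => x0 Hx0.
split => K cK Kn.
  exact: (c_main Hx0 cK Kn).
exact: (g_main Hx0 cK Kn).
Qed.
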